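(* Let $F$ be an infinite field and let $n\geq 2$ be an integer. If $p\in F[x]$ is a nonconstant polynomial, then there exist matrices $A,B\in \mathrm{M}_n(F)$ such that $p(AB)-p(BA)$ is algebraic of degree $n$ over $F$.
   Context: An element $a$ of a ring with center $Z$ is algebraic of degree $n$ over $Z$ if there is a polynomial $f\in Z[x]$ of degree $n$ with $f(a)=0$ and no nonzero polynomial of smaller degree in $Z[x]$ annihilates $a$. *)

(* Defs.v *)
From HB Require Import structures.
From mathcomp Require Import all_boot all_order all_algebra.
Set Implicit Arguments. Unset Strict Implicit. Unset Printing Implicit Defensive.
Import GRing.Theory.
Local Open Scope ring_scope.

Definition central (R : nzRingType) (z : R) : Prop := forall y : R, z * y = y * z.

(* a polynomial over R whose coefficients all lie in the center Z of R,
   i.e. an element of Z[x] *)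
Definition central_poly (R : nzRingType) (f : {poly R}) : Prop :=
  forall i, central f`_i.

(* a is algebraic of degree n over the center Z of R: some f in Z[x] of
   degree n (size n.+1) annihilates a, and no nonzero g in Z[x] of degree
   < n annihilates a. *)
Definition algebraic_of_degree (R : nzRingType) (a : R) (n : nat) : Prop :=
  (exists f : {poly R}, [/\ central_poly f, size f = n.+1 & f.[a] = 0]) /\
  (forall g : {poly R}, central_poly g -> g != 0 -> (size g <= n)%N ->
     g.[a] != 0).

(* Main.v *)
Require Import Defs.
From HB Require Import structures.
From mathcomp Require Import all_boot all_order all_algebra.
From mathcomp Require Import ring zify.
Import GRing.Theory.
Local Open Scope ring_scope.

Section S1.
Variable F : fieldType.

Lemma sum_ind (N : nat) (G : 'I_N.+1 -> F) (t : nat) :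
  \sum_(k < N.+1) G k * ((k : nat) == t)%:R = if (t < N.+1)%N then G (inord t) else 0.
Proof.
case: ifP => ht.
  rewrite (bigD1 (inord t)) //= inordK // eqxx mulr1 big1 ?addr0 // => k hk.
  have -> : ((k : nat) == t) = false.
    by apply/negbTE; apply: contra hk => /eqP hk; apply/eqP/val_inj; rewrite /= inordK // hk.
  by rewrite mulr0.
rewrite big1 // => k _.
have -> : ((k : nat) == t) = false.
  by apply/negbTE; apply/eqP => hk; move: (ltn_ord k); rewrite hk ht.
by rewrite mulr0.
Qed.

Lemma mul_mx_delta' m (M : 'M[F]_m) a b i j :
  (M *m (delta_mx a b : 'M_m)) i j = M i a * (j == b)%:R.
Proof.
rewrite mxE (bigD1 a) //= mxE eqxx /= big1 ?addr0 // => k hk.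
by rewrite mxE (negbTE hk) mulr0.
Qed.

Lemma mul_delta_mx' m (M : 'M[F]_m) a b i j :
  ((delta_mx a b : 'M_m) *m M) i j = (i == a)%:R * M b j.
Proof.
rewrite mxE (bigD1 b) //= mxE eqxx andbT big1 ?addr0 // => k hk.
by rewrite mxE (negbTE hk) andbF mul0r.
Qed.

Lemma central_scalar m (z : 'M[F]_m.+1) : central z -> z = (z 0 0)%:M.
Proof.
move=> hz; apply/matrixP => i j; rewrite mxE.
have h1 := hz (delta_mx j j); have h2 := hz (delta_mx 0 j).
have e1 : z i j = (i == j)%:R * z j j.
  by move/matrixP: h1 => /(_ i j); rewrite mul_mx_delta' mul_delta_mx' eqxx mulr1.
have e2 : z 0 0 = z j j.
  by move/matrixP: h2 => /(_ 0 j); rewrite mul_mx_delta' mul_delta_mx' !eqxx mulr1 mul1r.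
by rewrite e1 e2; case: eqP => _; rewrite ?mul1r ?mul0r.
Qed.

End S1.
Section S2.
Variable F : fieldType.
Hypothesis F_infinite : forall s : seq F, exists x : F, x \notin s.

Lemma uniq_seq k : exists s : seq F, uniq s /\ size s = k.
Proof.
elim: k => [|k [s [us ss]]]; first by exists [::].
have [x hx] := F_infinite s; exists (x :: s); by rewrite /= hx us ss.
Qed.

Lemma notin_img (p : {poly F}) (hp : (1 < size p)%N) (s : seq F) :
  exists x, p.[x] \notin s.
Proof.
pose r := \prod_(v <- s) (p - v%:P).
have r0 : r != 0.
  rewrite prodf_seq_neq0; apply/allP => v _ /=.
  rewrite -size_poly_eq0 size_addl ?size_opp ?size_polyC; first by rewrite -lt0n (ltn_trans _ hp).
  by apply: leq_ltn_trans hp; case: (v != 0).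
have [t [ut st]] := uniq_seq (size r).
have : ~~ all (root r) t.
  by apply/negP => ha; have := max_poly_roots r0 ha ut; rewrite st ltnn.
case/allPn => x _ hx; exists x; apply: contra hx => hxs.
rewrite /root /r horner_prod prodf_seq_eq0.
by apply/hasP; exists p.[x] => //; rewrite !hornerE subrr eqxx.
Qed.

Lemma distinct_vals (p : {poly F}) (hp : (1 < size p)%N) k :
  exists xs : seq F, size xs = k /\ uniq (map (horner p) xs).
Proof.
elim: k => [|k [xs [sx ux]]]; first by exists [::].
have [x hx] := notin_img p hp (map (horner p) xs).
by exists (x :: xs); rewrite /= hx ux sx.
Qed.
End S2.
Section S3.
Variable F : fieldType.
Variable m : nat.
Variable qn : nat -> F.
Hypothesis hq : forall i j, (i < m.+1)%N -> (j < m.+1)%N -> i != j -> qn i != qn j.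

Definition Lsh : 'M[F]_m.+1 := \matrix_(i,j) ((i:nat) == j.+1)%:R.
Definition Am : 'M[F]_m.+1 :=
  \matrix_(i,j) (if (j <= i)%N then \prod_(j <= k < i) (qn k - qn i)^-1 else 0).
Definition Qm : 'M[F]_m.+1 := diag_mx (\row_i qn i).

Lemma key_gen (M L : 'M[F]_m.+1)
  (hM : forall i j, M i j = if (j <= i)%N then \prod_(j <= k < i) (qn k - qn i)^-1 else 0)
  (hL : forall i j, L i j = ((i:nat) == j.+1)%:R) :
  M *m Qm - M *m L = Qm *m M.
Proof.
apply/matrixP => i j.
rewrite /Qm mul_mx_diag mul_diag_mx !mxE.
under eq_bigr => k _ do rewrite hL.
rewrite sum_ind !hM.
apply/eqP; rewrite subr_eq; apply/eqP.
case: (ltngtP j i) => hji.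
- have hj1 : (j.+1 < m.+1)%N by exact: leq_ltn_trans hji (ltn_ord i).
  rewrite hj1 inordK // hji big_ltn //.
  have hc : qn j - qn i != 0 by rewrite subr_eq0 hq // neq_ltn hji.
  set P := \prod_(_ <= _ < _) _.
  field; exact: hc.
- rewrite mulr0 mul0r.
  case: (ltnP j.+1 m.+1) => h; last by rewrite addr0.
  by rewrite inordK // ltnNge (ltnW hji) /= addr0.
- rewrite hji big_geq // mul1r mulr1.
  case: (ltnP i.+1 m.+1) => h; last by rewrite addr0.
  by rewrite inordK // ltnn addr0.
Qed.

Lemma Am_unit : Am \in unitmx.
Proof.
rewrite unitmxE det_trig; last first.
  by apply/is_trig_mxP => i j hij; rewrite mxE leqNgt hij.
rewrite big1 ?unitr1 // => i _; rewrite mxE leqnn big_geq //.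
Qed.

Lemma Lsh_pow k (i j : 'I_m.+1) : (Lsh ^+ k) i j = ((i:nat) == (j + k)%N)%:R.
Proof.
elim: k i j => [|k IH] i j.
  by rewrite expr0 mxE addn0.
rewrite [Lsh ^+ k.+1]exprSr -mulmxE mxE.
under eq_bigr => l _ do rewrite IH mxE.
rewrite sum_ind; case: ifP => hj.
  by rewrite inordK // addSnnS.
suff -> : ((i:nat) == (j + k.+1)%N) = false by [].
apply/negP => /eqP hi; move: (ltn_ord i) (negbT hj); rewrite hi -leqNgt addnS.
move=> a b; lia.
Qed.

Lemma sum_ind_nat N (G : nat -> F) t : (t < N)%N ->
  \sum_(i < N) G i * ((i:nat) == t)%:R = G t.
Proof.
move=> ht; rewrite (bigD1 (Ordinal ht)) //= eqxx mulr1 big1 ?addr0 // => k hk.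
have /negbTE -> : (k:nat) != t by apply: contra hk => /eqP e; apply/eqP/val_inj.
by rewrite mulr0.
Qed.

Lemma alg_L : algebraic_of_degree Lsh m.+1.
Proof.
split.
  exists ('X^(m.+1) : {poly 'M[F]_m.+1}); split.
  - by move=> i y; rewrite coefXn (commr_nat y).
  - by rewrite size_polyXn.
  - rewrite hornerXn; apply/matrixP => i j; rewrite Lsh_pow mxE.
    suff -> : ((i:nat) == (j + m.+1)%N) = false by [].
    by apply/negP => /eqP hi; move: (ltn_ord i); rewrite hi; lia.
move=> g cg g0 sg; apply/negP => /eqP h.
have hs := polySpred g0.
set k := (size g).-1 in hs.
have hk : (k < m.+1)%N by rewrite -ltnS -hs.
have := congr1 (fun M : 'M[F]_m.+1 => M (inord k) 0) h.
rewrite horner_coef summxE /=.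
under eq_bigr => i _ do rewrite (@central_scalar F m _ (cg i)) -mulmxE mul_scalar_mx mxE Lsh_pow inordK // add0n eq_sym.
rewrite (@sum_ind_nat (size g) (fun i => g`_i 0 0) k) ?hs // mxE => hz.
move: g0; rewrite -lead_coef_eq0 lead_coefE -/k (@central_scalar F m _ (cg k)) hz.
by rewrite -scalemx1 scale0r eqxx.
Qed.

End S3.

Lemma main_lemma (F : fieldType)
  (F_infinite : forall s : seq F, exists x : F, x \notin s)
  (m : nat) (p : {poly F}) (hp : (1 < size p)%N) :
  exists A B : 'M[F]_m.+1,
    algebraic_of_degree (horner_mx (A *m B) p - horner_mx (B *m A) p) m.+1.
Proof.
have [xs [sx ux]] := @distinct_vals F F_infinite p hp m.+1.
pose qn k := p.[nth 0 xs k].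
have hq : forall i j, (i < m.+1)%N -> (j < m.+1)%N -> i != j -> qn i != qn j.
  move=> i j hi hj hij; rewrite /qn -!(nth_map 0 0 (horner p)) ?sx //.
  by rewrite nth_uniq ?size_map ?sx.
pose X : 'M[F]_m.+1 := diag_mx (\row_(i < m.+1) nth 0 xs i).
pose A := Am F m qn.
have hu : A \in unitmx := @Am_unit F m qn.
exists A, (invmx A *m X).
rewrite mulmxA mulmxV // mul1mx horner_mx_uconjC //.
have hQ : horner_mx X p = Qm F m qn.
  rewrite horner_mx_diag; congr diag_mx; apply/matrixP => i j; rewrite !mxE.
  by [].
have hk : A *m Qm F m qn - A *m Lsh F m = Qm F m qn *m A.
  by apply: key_gen => // i j; rewrite mxE.
rewrite hQ -mulmxA -hk mulmxBr !mulKmx // opprB addrC subrK.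
exact: alg_L.
Qed.

Theorem lemma2p8 (F : fieldType)
  (F_infinite : forall s : seq F, exists x : F, x \notin s)
  (n : nat) (hn : (2 <= n)%N) (p : {poly F}) (hp : (1 < size p)%N) :
  exists A B : 'M[F]_n.-1.+1,
    algebraic_of_degree (horner_mx (A *m B) p - horner_mx (B *m A) p) n.
Proof.
case: n hn => [//|n] hn /=.
exact: main_lemma.
Qed.
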